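(* Let $m=2$ and $i\in[n]$. If $g$ is a nonzero element of $\mathrm{LSym}$ and $g/\kappa_i\in\mathbb{C}[\mathbf{a},\mathbf{b}]$, then $g/\kappa_i\in\mathrm{LSym}$.
   Context: Variables $a_1,\dots,a_n,b_1,\dots,b_n$ (subscripts mod $n$), where $a_i=x_1^i$, $b_i=x_2^i$. $\mathrm{LSym}$ is the $\mathbb{C}$-subalgebra of $\mathbb{C}[\mathbf{a},\mathbf{b}]$ generated by $a_j+b_{j-1}$ and $a_jb_j$ for $j\in[n]$. $\kappa_i=\sum_{k=0}^{n-1}b_ib_{i+1}\cdots b_{i+k-1}a_{i+k+1}\cdots a_{i+n-1}$. *)

(* Defs.v *)
From mathcomp Require Import all_boot all_algebra.
From mathcomp Require Import complex.
From mathcomp Require Import Rstruct.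
From mathcomp Require Import mpoly.

Import GRing.Theory.
Local Open Scope ring_scope.

Definition C : fieldType := complex Rdefinitions.R.

(* We work with N := n.+1 >= 1 (the paper's n), indices 0..N-1 taken mod N.
   The polynomial ring C[a_0..a_{N-1}, b_0..b_{N-1}] is {mpoly C[N + N]}:
   variable lshift j is a_j, variable rshift j is b_j. *)
Notation PR n := {mpoly C[n.+1 + n.+1]}.

Definition av (n k : nat) : PR n := 'X_(lshift n.+1 (inZp k : 'I_n.+1)).
Definition bv (n k : nat) : PR n := 'X_(rshift n.+1 (inZp k : 'I_n.+1)).

(* Generators of LSym: a_j + b_{j-1} (j-1 = j + n mod N) and a_j b_j. *)
Definition lsym_gen (n : nat) (t : 'I_(n.+1 + n.+1)) : PR n :=
  match split t with
  | inl j => av n j + bv n (j + n)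
  | inr j => av n j * bv n j
  end.

(* LSym = the C-subalgebra generated by the generators, i.e. the set of
   polynomial expressions (with complex coefficients) in the generators. *)
Definition in_LSym (n : nat) (g : PR n) : Prop :=
  exists p : PR n, g = comp_mpoly [tuple lsym_gen n t | t < n.+1 + n.+1] p.

Definition kappa (n i : nat) : PR n :=
  \sum_(0 <= k < n.+1)
    ((\prod_(i <= l < i + k) bv n l) * (\prod_(i + k + 1 <= l < i + n.+1) av n l)).

(* Main.v *)
Require Import Defs.
From mathcomp Require Import all_boot all_algebra.
From mathcomp Require Import complex.
From mathcomp Require Import Rstruct.
From mathcomp Require Import mpoly.
From mathcomp Require Import fraction.
From mathcomp Require Import ring zify.
Import GRing.Theory.
Local Open Scope ring_scope.

Module A.
Local Open Scope ring_scope.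

Section Gen.
Variable k : nat.
Local Notation R := {mpoly C[k]}.

Lemma mpoly_ind_ring (P : R -> Prop) :
  (forall c, P c%:MP) -> (forall t, P 'X_t) ->
  (forall p q, P p -> P q -> P (p + q)) -> (forall p q, P p -> P q -> P (p * q)) ->
  forall p, P p.
Proof.
move=> hC hX hD hM p0; elim/mpolyind: p0 => [|c m p _ _ hp].
  by rewrite -mpolyC0.
apply: (hD) => //; rewrite -mul_mpolyC; apply: (hM) => //.
rewrite mpolyXE_id; apply: (big_ind P); [by rewrite -mpolyC1 | exact: hM | ].
move=> t _; elim: (m t) => [|e ih]; first by rewrite expr0 -mpolyC1.
by rewrite exprS; apply: (hM).
Qed.

Lemma eq_on_ring (S : ringType) (f g : R -> S) :
  {morph f : x y / x + y} -> {morph f : x y / x * y} ->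
  {morph g : x y / x + y} -> {morph g : x y / x * y} ->
  (forall c, f c%:MP = g c%:MP) -> (forall t, f 'X_t = g 'X_t) -> forall p, f p = g p.
Proof.
move=> fD fM gD gM hC hX; apply: mpoly_ind_ring => // p q hp hq.
  by rewrite fD gD hp hq.
by rewrite fM gM hp hq.
Qed.

Definition sub0 (t : 'I_k) : R -> R :=
  comp_mpoly [tuple (if s == t then 0 else 'X_s) | s < k].

Lemma sub0X t s : sub0 t 'X_s = if s == t then 0 else 'X_s.
Proof. by rewrite /sub0 comp_mpolyXU -(tnth_nth 0) tnth_mktuple. Qed.

Lemma sub0D t : {morph sub0 t : x y / x + y}.
Proof. by move=> x y; rewrite /sub0 rmorphD. Qed.
Lemma sub0M t : {morph sub0 t : x y / x * y}.
Proof. by move=> x y; rewrite /sub0 rmorphM. Qed.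
Lemma sub0C t c : sub0 t c%:MP = c%:MP.
Proof. by rewrite /sub0 comp_mpolyC. Qed.

Lemma sub0_dvd t w : exists w', w - sub0 t w = 'X_t * w'.
Proof.
elim/mpoly_ind_ring: w.
- by move=> c; exists 0; rewrite sub0C subrr mulr0.
- move=> s; rewrite sub0X; case: eqP => [->|_].
    by exists 1; rewrite subr0 mulr1.
  by exists 0; rewrite subrr mulr0.
- move=> p q [p' hp] [q' hq]; exists (p' + q').
  by rewrite sub0D mulrDr -hp -hq opprD addrACA.
- move=> p q [p' hp] [q' hq]; exists (p' * q + sub0 t p * q').
  rewrite sub0M mulrDr mulrA -hp mulrCA -hq.
  by rewrite mulrBl mulrBr addrA subrK.
Qed.

Definition dvdP (a b : R) := exists t, b = a * t.
Definition Cop (c d : R) := forall q, (exists t, d * q = c * t) -> dvdP c q.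

Lemma Cop1 c : Cop c 1.
Proof. by move=> q [t]; rewrite mul1r => ->; exists t. Qed.

Lemma CopM c d1 d2 : Cop c d1 -> Cop c d2 -> Cop c (d1 * d2).
Proof.
move=> h1 h2 q [t ht].
have [u hu] : dvdP c (d2 * q) by apply: h1; exists t; rewrite mulrA.
by apply: h2; exists u.
Qed.

Lemma mpolyX_neq0 (t : 'I_k) : 'X_t != 0 :> R.
Proof.
apply/negP => /eqP/(congr1 (mcoeff U_(t)%MM)).
by rewrite mcoeffX mcoeff0 eqxx => /eqP; rewrite oner_eq0.
Qed.

Lemma CopX c t : c != 0 -> sub0 t c = c -> Cop c 'X_t.
Proof.
move=> c0 hc q [w hw].
have hs : sub0 t w = 0.
  have := congr1 (sub0 t) hw; rewrite !sub0M hc sub0X eqxx mul0r.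
  by move/esym/eqP; rewrite mulf_eq0 (negbTE c0) /= => /eqP.
have [w' hw'] := sub0_dvd t w; rewrite hs subr0 in hw'.
exists w'; apply: (mulfI (mpolyX_neq0 t)).
by rewrite hw hw' mulrCA.
Qed.

Lemma Cop_step c u v x : u != 0 -> Cop u v -> c = x * u - v -> Cop c u.
Proof.
move=> u0 huv -> q [t ht].
have [t' ht'] : dvdP u t.
  by apply: huv; exists (x * t - q); rewrite mulrBr ht; ring.
exists t'; apply: (mulfI u0); rewrite ht ht'; ring.
Qed.

End Gen.
Arguments sub0 {k}.
Arguments dvdP {k}.
Arguments Cop {k}.

End A.
Import A.

Module K.
Local Open Scope ring_scope.

Section Cont.
Variable T : comRingType.

Fixpoint Kc (x y : nat -> T) (a l : nat) {struct l} : T :=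
  match l with
  | 0 => 1
  | l1.+1 => match l1 with
             | 0 => x a
             | l2.+1 => x (a + l1)%N * Kc x y a l1 - y (a + l2)%N * Kc x y a l2
             end
  end.

Definition Km x y a l := if l is l'.+1 then Kc x y a l' else 0.

Lemma KcS x y a l : Kc x y a l.+2 = x (a + l.+1)%N * Kc x y a l.+1 - y (a + l)%N * Kc x y a l.
Proof. by []. Qed.

Lemma Kc1 x y a : Kc x y a 1 = x a.
Proof. by []. Qed.

Lemma Kc_rec1 x y a l : Kc x y a l.+1 = x (a + l)%N * Kc x y a l - y (a + l.-1)%N * Km x y a l.
Proof. case: l => [|l] /=; last by []. by rewrite addn0 mulr1 mulr0 subr0. Qed.

Lemma Kc_left x y a l :
  Kc x y a l.+2 = x a * Kc x y a.+1 l.+1 - y a * Kc x y a.+2 l.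
Proof.
suff: (Kc x y a l.+2 = x a * Kc x y a.+1 l.+1 - y a * Kc x y a.+2 l) /\
      (Kc x y a l.+3 = x a * Kc x y a.+1 l.+2 - y a * Kc x y a.+2 l.+1) by case.
elim: l => [|l [ih1 ih2]].
  split; rewrite /= ?addn0 ?addn1 ?addn2 ?addnS ?addSn ?addn0 ?addn1; ring.
split => //.
rewrite KcS ih1 ih2 [Kc x y a.+1 l.+3]KcS [Kc x y a.+2 l.+2]KcS.
have e1 : (a + l.+3 = a.+1 + l.+2)%N by rewrite addSn addnS.
have e2 : (a + l.+2 = a.+1 + l.+1)%N by rewrite addSn addnS.
have e3 : (a.+2 + l.+1 = a.+1 + l.+2)%N by rewrite !addSn !addnS.
have e4 : (a.+2 + l = a.+1 + l.+1)%N by rewrite !addSn !addnS.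
rewrite e1 e2 e3 e4; ring.
Qed.

Lemma Kc_ext x y x' y' a l :
  (forall j, (j < a + l)%N -> x j = x' j) ->
  (forall j, (j.+1 < a + l)%N -> y j = y' j) ->
  Kc x y a l = Kc x' y' a l.
Proof.
move=> hx hy.
suff H : forall l', (l' <= l)%N -> (Kc x y a l' = Kc x' y' a l') /\ ((l'.+1 <= l)%N -> Kc x y a l'.+1 = Kc x' y' a l'.+1).
  by case: (H l (leqnn l)).
elim=> [|l' ih] hl'.
  split => // h1; rewrite /= hx //; lia.
have [ih1 ih2] := ih (ltnW hl'); split; first exact: ih2.
move=> hl2; rewrite !KcS ih1 ih2 // hx ?hy //; lia.
Qed.

End Cont.
Arguments Kc {T}.
Arguments Km {T}.

Lemma Kc_morph (T S : comRingType) (f : {rmorphism T -> S}) x y a l :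
  f (@Kc T x y a l) = @Kc S (f \o x) (f \o y) a l.
Proof.
suff: f (@Kc T x y a l) = @Kc S (f \o x) (f \o y) a l /\
      f (@Kc T x y a l.+1) = @Kc S (f \o x) (f \o y) a l.+1 by case.
elim: l => [|l [ih1 ih2]]; first by rewrite /= rmorph1.
split => //; rewrite !KcS rmorphB !rmorphM /= ih1 ih2 //.
Qed.


Definition h0 {T : comRingType} (x y : nat -> T) m := Kc x y 0 m.+1.
Definition h1 {T : comRingType} (x y : nat -> T) m :=
  y m.+1 * Kc x y 1 m - y 0%N * Kc x y 2 m.
Definition Hs {T : comRingType} (x y : nat -> T) m q :=
  if q is q'.+1 then Kc x y 0 q'.+1 * h1 x y m - y m.+1 * Kc x y 1 q' * h0 x y m
  else h1 x y m.

Lemma Hs_morph (T S : comRingType) (f : {rmorphism T -> S}) x y m q :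
  f (@Hs T x y m q) = @Hs S (f \o x) (f \o y) m q.
Proof.
rewrite /Hs /h1 /h0; case: q => [|q]; rewrite ?rmorphB ?rmorphM !Kc_morph //.
by rewrite !rmorphB !rmorphM /= !Kc_morph.
Qed.

Lemma Hs_rec (T : comRingType) (x y : nat -> T) m q :
  Hs x y m q.+2 = x q.+1 * Hs x y m q.+1 - y q * Hs x y m q.
Proof.
rewrite /Hs; case: q => [|q].
  rewrite KcS /= add0n; ring.
rewrite KcS [Kc x y 1 q.+2]KcS !add0n !add1n; ring.
Qed.

Lemma Hs_close1 (T : comRingType) (x y : nat -> T) m :
  Kc x y 1 m.+1 = 0 -> Hs x y m m.+2 = Kc x y 0 m.+2 * h1 x y m.
Proof. by move=> h; rewrite /Hs h mulr0 mul0r subr0. Qed.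

Lemma Hs_close2 (T : comRingType) (x y : nat -> T) m :
  Kc x y 1 m.+1 = 0 -> Hs x y m m.+1 = Kc x y 0 m.+2 * h0 x y m.
Proof.
move=> h; rewrite /Hs Kc_left h /h1 /h0; ring.
Qed.

Lemma Km_y (T : comRingType) (x y : nat -> T) l :
  y (1 + l.-1)%N * Km x y 1 l = y l * Km x y 1 l.
Proof. by case: l => [|l] /=; rewrite ?mulr0 ?add1n. Qed.

Lemma Km_y2 (T : comRingType) (x y : nat -> T) a l :
  y (a + l.-1)%N * Km x y a l = y (a + l).-1 * Km x y a l.
Proof. by case: l => [|l] /=; rewrite ?mulr0 ?addnS. Qed.

Lemma Kc_reg (T : comRingType) (x y : nat -> T) a l :
  (forall j, (j < a + l)%N -> x j = 2) -> (forall j, (j.+1 < a + l)%N -> y j = 1) ->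
  Kc x y a l = l.+1%:R.
Proof.
move=> hx hy; rewrite (@Kc_ext _ x y (fun _ => 2) (fun _ => 1)) //.
suff: Kc (fun _ => 2 : T) (fun _ => 1) a l = l.+1%:R /\
      Kc (fun _ => 2 : T) (fun _ => 1) a l.+1 = l.+2%:R by case.
elim: l {hx hy} => [|l [ih1 ih2]] //; split => //.
rewrite KcS ih1 ih2; ring.
Qed.

Lemma Hs_ext (T : comRingType) (x y x' y' : nat -> T) m q :
  (forall j, (j < m.+2)%N -> x j = x' j) -> (forall j, (j < m.+2)%N -> y j = y' j) ->
  (q <= m.+2)%N -> Hs x y m q = Hs x' y' m q.
Proof.
move=> hx hy hq.
have E a l : (a + l <= m.+2)%N -> Kc x y a l = Kc x' y' a l.
  move=> hal; apply: Kc_ext => j hj; [apply: hx | apply: hy]; lia.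
rewrite /Hs /h1 /h0 !E ?hy //; case: q hq => [|q] hq; rewrite ?E //; lia.
Qed.

End K.
Import K.

Module M1.
Local Open Scope ring_scope.

Section Main.
Variable n : nat.
Variable i : 'I_n.+1.
Local Notation N := n.+1.
Local Notation R := {mpoly C[n.+1 + n.+1]}.

Definition phi : R -> R := comp_mpoly [tuple lsym_gen n t | t < n.+1 + n.+1].

Lemma phiX t : phi 'X_t = lsym_gen n t.
Proof. by rewrite /phi comp_mpolyXU -(tnth_nth 0) tnth_mktuple. Qed.

Lemma phiD : {morph phi : x y / x + y}. Proof. by move=> x y; rewrite /phi rmorphD. Qed.
Lemma phiB : {morph phi : x y / x - y}. Proof. by move=> x y; rewrite /phi rmorphB. Qed.
Lemma phiM : {morph phi : x y / x * y}. Proof. by move=> x y; rewrite /phi rmorphM. Qed.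
Lemma phiC c : phi c%:MP = c%:MP. Proof. by rewrite /phi comp_mpolyC. Qed.
Lemma phi1 : phi 1 = 1. Proof. by rewrite /phi rmorph1. Qed.

Lemma inZp_mod k : (inZp (k %% N) : 'I_N) = inZp k.
Proof. by apply: val_inj; rewrite /= modn_mod. Qed.

Lemma inZp_eq k l : (k %% N = l %% N)%N -> (inZp k : 'I_N) = inZp l.
Proof. by move=> h; apply: val_inj; rewrite /= h. Qed.

Lemma av_eq k l : (k %% N = l %% N)%N -> av n k = av n l.
Proof. by move=> h; rewrite /av (@inZp_eq k l h). Qed.
Lemma bv_eq k l : (k %% N = l %% N)%N -> bv n k = bv n l.
Proof. by move=> h; rewrite /bv (@inZp_eq k l h). Qed.

Lemma phi_av k : phi (av n k) = av n k + bv n (k + n).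
Proof.
rewrite /av phiX /lsym_gen (unsplitK (inl _)) /=.
congr (_ + _); first by apply: av_eq; rewrite modn_mod.
by apply: bv_eq; rewrite modnDml.
Qed.

Lemma phi_bv k : phi (bv n k) = av n k * bv n k.
Proof.
rewrite /bv phiX /lsym_gen (unsplitK (inr _)) /=.
by congr (_ * _); [apply: av_eq | apply: bv_eq]; rewrite modn_mod.
Qed.

Definition xr p := av n (i + p)%N.
Definition yr p := bv n (i + p)%N.

Definition kap p := \sum_(0 <= k < p.+1)
    ((\prod_(i <= l < i + k) bv n l) * (\prod_(i + k + 1 <= l < i + p.+1) av n l)).

Lemma kap_rec p : kap p.+1 = kap p * av n (i + p.+1)%N + \prod_(i <= l < i + p.+1) bv n l.
Proof.
rewrite /kap big_nat_recr //=.
rewrite [\prod_(i + p.+1 + 1 <= l < _) _]big_geq; last by lia.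
rewrite mulr1; congr (_ + _); rewrite mulr_suml; apply: eq_big_nat => k /andP [_ hk].
rewrite (addnS i p.+1) big_nat_recr /=; last by lia.
by rewrite mulrA.
Qed.

Lemma kap0 : kap 0 = 1.
Proof. by rewrite /kap big_nat1 !big_geq ?mulr1 // addn0. Qed.

Lemma phiK p : phi (Kc xr yr 1 p) = kap p.
Proof.
suff: phi (Kc xr yr 1 p) = kap p /\ phi (Kc xr yr 1 p.+1) = kap p.+1 by case.
elim: p => [|p [ih1 ih2]].
  split; first by rewrite /= phi1 kap0.
  rewrite Kc1 /xr phi_av kap_rec kap0 mul1r addn1 big_nat1; congr (_ + _).
  by apply: bv_eq; rewrite addSn -addnS modnDr.
split => //.
rewrite KcS phiB !phiM ih1 ih2 /xr /yr phi_av phi_bv [kap p.+2]kap_rec kap_rec.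
have e1 : bv n (i + (1 + p.+1) + n)%N = bv n (i + p.+1)%N.
  by apply: bv_eq; rewrite (_ : (i + (1 + p.+1) + n = (i + p.+1) + N)%N) ?modnDr //; lia.
rewrite e1 (add1n p.+1) (add1n p) (addnS i p.+1) big_nat_recr /=; last by lia.
ring.
Qed.

End Main.

End M1.
Import M1.

Module M2.
Local Open Scope ring_scope.

Section Main2.
Variable m : nat.
Variable i : 'I_m.+2.

Local Notation N := m.+2.
Local Notation R := {mpoly C[m.+2 + m.+2]}.
Local Notation xr := (xr m.+1 i).
Local Notation yr := (yr m.+1 i).

Definition ix p : 'I_(N + N) := lshift N (inZp (i + p)%N).
Definition iy p : 'I_(N + N) := rshift N (inZp (i + p)%N).
Lemma xrE p : xr p = 'X_(ix p). Proof. by []. Qed.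
Lemma yrE p : yr p = 'X_(iy p). Proof. by []. Qed.

Lemma inZp_inj p q : (p < N)%N -> (q < N)%N ->
  (inZp (i + p)%N : 'I_N) = inZp (i + q)%N -> p = q.
Proof.
move=> hp hq /(congr1 val) /= /eqP; rewrite eqn_modDl !modn_small //.
by move/eqP.
Qed.

Lemma ix_inj p q : (p < N)%N -> (q < N)%N -> ix p = ix q -> p = q.
Proof. by move=> hp hq /lshift_inj; apply: inZp_inj. Qed.
Lemma iy_inj p q : (p < N)%N -> (q < N)%N -> iy p = iy q -> p = q.
Proof. by move=> hp hq /rshift_inj; apply: inZp_inj. Qed.
Lemma ixy p q : ix p != iy q.
Proof. by rewrite /ix /iy eq_lrshift. Qed.

Definition e := ix m.+1.
Definition K := Kc xr yr 1 m.+1.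
Definition c := Kc xr yr 1 m.
Definition d := yr m * Km xr yr 1 m.

Lemma K_eq : K = 'X_e * c - d.
Proof. by rewrite /K Kc_rec1 add1n /c /d Km_y. Qed.

(* nonvanishing of continuants via the point x = 1, y = 0 *)
Definition v1 (t : 'I_(N + N)) : C := if split t is inl _ then 1 else 0.

Lemma Kc10 a l : Kc (fun _ => 1 : C) (fun _ => 0) a l = 1.
Proof.
suff: Kc (fun _ => 1 : C) (fun _ => 0) a l = 1 /\ Kc (fun _ => 1 : C) (fun _ => 0) a l.+1 = 1 by case.
elim: l => [|l [ih1 ih2]] //; split => //.
by rewrite KcS ih1 ih2 mul0r subr0 mulr1.
Qed.

Lemma Kc_neq0 l : Kc xr yr 1 l != 0.
Proof.
apply/negP => /eqP /(congr1 (meval v1)); rewrite Kc_morph meval0.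
rewrite (@Kc_ext _ _ _ (fun _ => 1) (fun _ => 0)).
- by rewrite Kc10 => /eqP; rewrite oner_eq0.
- by move=> j _ /=; rewrite xrE mevalXU /v1 /ix (unsplitK (inl _)).
- by move=> j _ /=; rewrite yrE mevalXU /v1 /iy (unsplitK (inr _)).
Qed.

Lemma c_neq0 : c != 0. Proof. exact: Kc_neq0. Qed.

Lemma sub0_Kc t l : (forall j, (j < 1 + l)%N -> ix j != t) ->
  (forall j, (j.+1 < 1 + l)%N -> iy j != t) ->
  sub0 t (Kc xr yr 1 l) = Kc xr yr 1 l.
Proof.
move=> hx hy; rewrite /sub0 Kc_morph; apply: Kc_ext => j hj /=.
  by rewrite -/(sub0 t _) xrE sub0X (negbTE (hx j hj)).
by rewrite -/(sub0 t _) yrE sub0X (negbTE (hy j hj)).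
Qed.

Lemma sub0e_c : sub0 e c = c.
Proof.
apply: sub0_Kc => j hj; last by rewrite eq_sym ixy.
by apply/eqP => /ix_inj h; have := h (ltn_trans hj (ltnSn _)) (ltnSn _); lia.
Qed.

Lemma sub0e_Km_gen l : (l <= m)%N -> sub0 e (Km xr yr 1 l) = Km xr yr 1 l.
Proof.
case: l => [|l] hl /=; first by rewrite /sub0 rmorph0.
apply: sub0_Kc => j hj; last by rewrite eq_sym ixy.
by apply/eqP => /ix_inj h; have := h ltac:(lia) (ltnSn _); lia.
Qed.

Lemma sub0e_Km : sub0 e (Km xr yr 1 m) = Km xr yr 1 m.
Proof. exact: sub0e_Km_gen. Qed.

Lemma sub0e_d : sub0 e d = d.
Proof. by rewrite /d sub0M sub0e_Km yrE sub0X eq_sym (negbTE (ixy _ _)). Qed.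

Lemma Cop_chain j : (j < m)%N -> Cop (Kc xr yr 1 j.+1) (Kc xr yr 1 j).
Proof.
elim: j => [|j ih] hj; first exact: Cop1.
apply: (@Cop_step _ _ (Kc xr yr 1 j.+1) (yr j.+1 * Kc xr yr 1 j) (xr j.+2)).
- exact: Kc_neq0.
- apply: CopM; last by apply: ih; lia.
  rewrite yrE; apply: CopX; first exact: Kc_neq0.
  apply: sub0_Kc => j' hj'; first by rewrite ixy.
  by apply/eqP => /iy_inj h; have := h ltac:(lia) ltac:(lia); lia.
- by rewrite KcS add1n.
Qed.

Lemma Cop_gen l : (l <= m)%N -> Cop (Kc xr yr 1 l) (yr l * Km xr yr 1 l).
Proof.
case: l => [|l] hl.
  by move=> q _; exists q; rewrite /= mul1r.
apply: CopM.
  rewrite yrE; apply: CopX; first exact: Kc_neq0.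
  apply: sub0_Kc => j' hj'; first by rewrite ixy.
  by apply/eqP => /iy_inj h; have := h ltac:(lia) ltac:(lia); lia.
by apply: Cop_chain.
Qed.

Lemma Cop_cd : Cop c d.
Proof. exact: Cop_gen. Qed.

Lemma divK1 q : dvdP K (c * q) -> dvdP K q.
Proof.
move=> [Q hQ].
have [Q' hQ'] : dvdP c Q.
  apply: Cop_cd; exists ('X_e * Q - q).
  have := hQ; rewrite K_eq => hQ2; rewrite mulrBr; apply/eqP.
  by rewrite eq_sym subr_eq hQ2; apply/eqP; ring.
exists Q'; apply: (mulfI c_neq0); rewrite hQ hQ'; ring.
Qed.

Lemma divKn s q : dvdP K (c ^+ s * q) -> dvdP K q.
Proof.
elim: s q => [|s ih] q; first by rewrite expr0 mul1r.
by rewrite exprS -mulrA => /divK1; apply: ih.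
Qed.

Lemma pdiv q : exists s Q R1, c ^+ s * q = K * Q + R1 /\ sub0 e R1 = R1.
Proof.
have cfix s : sub0 e (c ^+ s) = c ^+ s.
  by elim: s => [|s ih]; rewrite ?expr0 /sub0 ?rmorph1 // exprS -/(sub0 e _) sub0M ih sub0e_c.
elim/mpoly_ind_ring: q.
- by move=> a; exists 0%N, 0, a%:MP; rewrite expr0 mul1r mulr0 add0r sub0C.
- move=> t; case: (eqVneq t e) => [->|nte].
    exists 1%N, 1, d; rewrite expr1 mulr1 K_eq sub0e_d; split => //; ring.
  by exists 0%N, 0, 'X_t; rewrite expr0 mul1r mulr0 add0r sub0X (negbTE nte).
- move=> p q [s1 [Q1 [R1 [h1 f1]]]] [s2 [Q2 [R2 [h2 f2]]]].
  exists (s1 + s2)%N, (c ^+ s2 * Q1 + c ^+ s1 * Q2), (c ^+ s2 * R1 + c ^+ s1 * R2).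
  split; last by rewrite sub0D !sub0M !cfix f1 f2.
  have -> : c ^+ (s1 + s2) * (p + q) = c ^+ s2 * (c ^+ s1 * p) + c ^+ s1 * (c ^+ s2 * q).
    by rewrite exprD; ring.
  rewrite h1 h2; ring.
- move=> p q [s1 [Q1 [R1 [h1 f1]]]] [s2 [Q2 [R2 [h2 f2]]]].
  exists (s1 + s2)%N, (Q1 * (K * Q2 + R2) + R1 * Q2), (R1 * R2).
  split; last by rewrite sub0M f1 f2.
  have -> : c ^+ (s1 + s2) * (p * q) = (c ^+ s1 * p) * (c ^+ s2 * q).
    by rewrite exprD; ring.
  rewrite h1 h2; ring.
Qed.

End Main2.

End M2.
Import M2.

Module E.
Import Num.Theory.
Local Open Scope ring_scope.

Definition xv (m p : nat) : C := if p == m.+1 then m%:R else 2.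
Definition yv (m p : nat) : C := if p == m then m.+1%:R else if p == m.+1 then 0 else 1.

Lemma natC_neq0 k : (k.+1%:R : C) != 0.
Proof. have : (k.+1%:R : complex Rdefinitions.R) != 0 by rewrite pnatr_eq0. exact. Qed.

Lemma reg_x m a l : (a + l <= m.+1)%N -> forall j, (j < a + l)%N -> xv m j = 2.
Proof. by move=> h j hj; rewrite /xv ifF //; apply/eqP; lia. Qed.
Lemma reg_y m a l : (a + l <= m.+1)%N -> forall j, (j.+1 < a + l)%N -> yv m j = 1.
Proof. by move=> h j hj; rewrite /yv ifF ?ifF //; apply/eqP; lia. Qed.

Lemma Kv_reg m a l : (a + l <= m.+1)%N -> Kc (xv m) (yv m) a l = l.+1%:R.
Proof. by move=> h; apply: Kc_reg; [apply: reg_x h | apply: reg_y h]. Qed.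

Lemma Km_reg m a l : (a + l <= m.+2)%N -> Km (xv m) (yv m) a l = l%:R.
Proof. by case: l => [|l] h //=; rewrite Kv_reg //; lia. Qed.

Lemma E_K m : Kc (xv m) (yv m) 1 m.+1 = 0.
Proof.
rewrite Kc_rec1 Km_y add1n Km_reg // Kv_reg //.
by rewrite /xv /yv eqxx eqxx; ring.
Qed.

Lemma yv0 m : yv m 0 = 1.
Proof. by rewrite /yv; case: eqP => [<-|_] //. Qed.

Lemma Kc2 m : Kc (xv m) (yv m) 2 m = 1.
Proof.
case: m => [|m] //.
rewrite Kc_rec1 Km_y2 Km_reg // Kv_reg //= /xv /yv !eqxx; ring.
Qed.

Lemma E_Hs m q : (q <= m.+2)%N -> Hs (xv m) (yv m) m q != 0.
Proof.
have h1v : h1 (xv m) (yv m) m = -1.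
  by rewrite /h1 Kc2 yv0 /yv eqxx ifF; [ring | apply/eqP; lia].
move=> hq; case: q hq => [|q] hq.
  by rewrite /Hs h1v oppr_eq0 oner_eq0.
have yN : yv m m.+1 = 0 by rewrite /yv ifF ?eqxx //; apply/eqP; lia.
rewrite /Hs h1v yN !mul0r subr0.
case: (ltngtP q m.+1) hq => [hlt|hgt|->] hq; first last.
- rewrite KcS Kv_reg // Kv_reg //= /xv /yv !eqxx.
  have -> : (m%:R * m.+2%:R - m.+1%:R * m.+1%:R) * -1 = (1 : C) by ring.
  by rewrite oner_eq0.
- lia.
- by rewrite Kv_reg ?mulrN1 ?oppr_eq0 ?natC_neq0 //; lia.
Qed.

End E.
Import E.

Module M3.
Local Open Scope ring_scope.
Local Notation "x %:F" := (@tofrac _ x).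

Section Main3.
Variable m : nat.
Variable i : 'I_m.+2.
Local Notation N := m.+2.
Local Notation R := {mpoly C[m.+2 + m.+2]}.
Local Notation xr := (xr m.+1 i).
Local Notation yr := (yr m.+1 i).
Local Notation F := {fraction R}.
Local Notation e := (e m i).
Local Notation K := (K m i).
Local Notation c := (c m i).
Local Notation d := (d m i).

Definition hth (t : 'I_(N + N)) : F :=
  if t == e then d%:F / c%:F else ('X_t)%:F.
Definition th : R -> F := mmap ((@tofrac _) \o (@mpolyC _ C)) hth.

Lemma thX t : th 'X_t = hth t. Proof. by rewrite /th mmapX mmap1U. Qed.
Lemma thC a : th a%:MP = (a%:MP)%:F. Proof. by rewrite /th mmapC. Qed.
Lemma thD : {morph th : x y / x + y}. Proof. by move=> x y; rewrite /th rmorphD. Qed.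
Lemma thM : {morph th : x y / x * y}. Proof. by move=> x y; rewrite /th rmorphM. Qed.

Lemma th_sub p : th (sub0 e p) = (sub0 e p)%:F.
Proof.
apply: (@eq_on_ring _ _ (fun p => th (sub0 e p)) (fun p => (sub0 e p)%:F)).
- by move=> x y; rewrite sub0D thD.
- by move=> x y; rewrite sub0M thM.
- by move=> x y; rewrite sub0D rmorphD.
- by move=> x y; rewrite sub0M rmorphM.
- by move=> a; rewrite sub0C thC.
- move=> t; rewrite sub0X; case: ifP => ht; first by rewrite /th !rmorph0.
  by rewrite thX /hth ht.
Qed.

Lemma th_fix p : sub0 e p = p -> th p = p%:F.
Proof. by move=> h; rewrite -h th_sub. Qed.

Lemma cF_neq0 : c%:F != 0 :> F.
Proof. by rewrite tofrac_eq0 (c_neq0 m i). Qed.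

Lemma thK : th K = 0.
Proof.
rewrite (K_eq m i) /th rmorphB rmorphM /= -/th thX /hth eqxx.
rewrite (th_fix _ (sub0e_c m i)) (th_fix _ (sub0e_d m i)) mulfVK ?subrr //.
exact: cF_neq0.
Qed.

Lemma th_ker q : th q = 0 -> dvdP K q.
Proof.
move=> hq; have [s [Q [R1 [h hR1]]]] := pdiv m i q.
apply: (@divKn m i s); exists Q.
have hR : R1 = 0.
  have : th (c ^+ s * q) = th (K * Q + R1) by rewrite h.
  rewrite thM hq mulr0 thD thM thK mul0r add0r (th_fix _ hR1) => /esym/eqP.
  by rewrite tofrac_eq0 => /eqP.
by rewrite h hR addr0.
Qed.

End Main3.

End M3.
Import M3.

Module M4.
Local Open Scope ring_scope.
Local Notation "x %:F" := (@tofrac _ x).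

Lemma fS1 (T : fieldType) (x y h b : T) : h != 0 -> (x * h - y * b) / h + y * b / h = x.
Proof. by move=> h0; field. Qed.
Lemma fS2 (T : fieldType) (y a b : T) : a != 0 -> b != 0 -> b / a * (y * a / b) = y.
Proof. by move=> a0 b0; field; apply/andP. Qed.
Lemma fS0 (T : fieldType) (x y a0 h1 l : T) : h1 != 0 -> l != 0 ->
  (x * h1 - y * a0) / h1 + y * (l * a0) / (l * h1) = x.
Proof. by move=> u0 v0; field; apply/andP. Qed.

Section Main4.
Variable m : nat.
Variable i : 'I_m.+2.
Local Notation N := m.+2.
Local Notation R := {mpoly C[m.+2 + m.+2]}.
Local Notation xr := (xr m.+1 i).
Local Notation yr := (yr m.+1 i).
Local Notation F := {fraction R}.
Local Notation K := (K m i).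
Local Notation th := (th m i).
Local Notation phi := (phi m.+1).

Definition rel (j : 'I_N) : nat := ((j : nat) + (N - i)) %% N.

Lemma rel_gen k : rel (inZp k) = ((k + (N - i)) %% N)%N.
Proof. by rewrite /rel /= modnDml. Qed.

Lemma rel_inZp p : (p < N)%N -> rel (inZp (i + p)) = p.
Proof.
move=> hp; rewrite rel_gen (_ : (i + p + (N - i) = p + N)%N); last first.
  by have := ltn_ord i; lia.
by rewrite modnDr modn_small.
Qed.

Lemma inZp_rel (j : 'I_N) : inZp (i + rel j) = j.
Proof.
apply: val_inj; rewrite /= /rel modnDmr (_ : (i + (j + (N - i)) = j + N)%N).
  by rewrite modnDr modn_small.
by have := ltn_ord i; lia.
Qed.

Lemma rel_lt (j : 'I_N) : (rel j < N)%N.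
Proof. by rewrite /rel ltn_mod. Qed.

Definition vpt (t : 'I_(N + N)) : C :=
  match split t with inl j => xv m (rel j) | inr j => yv m (rel j) end.

Lemma vpt_x p : (p < N)%N -> meval vpt (xr p) = xv m p.
Proof. by move=> hp; rewrite xrE mevalXU /vpt /ix (unsplitK (inl _)) rel_inZp. Qed.
Lemma vpt_y p : (p < N)%N -> meval vpt (yr p) = yv m p.
Proof. by move=> hp; rewrite yrE mevalXU /vpt /iy (unsplitK (inr _)) rel_inZp. Qed.

Lemma vpt_K : meval vpt K = 0.
Proof.
rewrite /K Kc_morph -(E_K m); apply: Kc_ext => j hj /=.
  by rewrite vpt_x //; lia.
by rewrite vpt_y //; lia.
Qed.

Lemma vpt_Hs q : (q <= N)%N -> meval vpt (Hs xr yr m q) = Hs (xv m) (yv m) m q.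
Proof.
move=> hq; rewrite Hs_morph; apply: Hs_ext => // j hj /=.
  by rewrite vpt_x.
by rewrite vpt_y.
Qed.

Definition X p := th (xr p).
Definition Y p := th (yr p).
Definition HsF q := Hs X Y m q.

Lemma HsF_th q : HsF q = th (Hs xr yr m q).
Proof. by rewrite /M3.th Hs_morph. Qed.

Lemma HsF_neq0 q : (q <= N)%N -> HsF q != 0.
Proof.
move=> hq; rewrite HsF_th; apply/negP => /eqP /th_ker [Q hQ].
have := congr1 (meval vpt) hQ; rewrite mevalM vpt_K mul0r vpt_Hs //.
by move/eqP; rewrite (negbTE (E_Hs m q hq)).
Qed.

Lemma KF : Kc X Y 1 m.+1 = 0.
Proof.
have := thK m i; rewrite /K /M3.th Kc_morph => <-.
by [].
Qed.

Definition al p := HsF p.+1 / HsF p.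
Definition be p := Y p * HsF p / HsF p.+1.

Lemma S1 q : (q < m.+1)%N -> al q.+1 + be q = X q.+1.
Proof.
move=> hq; rewrite /al /be /HsF Hs_rec.
have h1 : HsF q.+1 != 0 by apply: HsF_neq0; lia.
exact: fS1.
Qed.

Lemma S2 p : (p < N)%N -> al p * be p = Y p.
Proof.
move=> hp; rewrite /al /be.
have h1 : HsF p != 0 by apply: HsF_neq0; lia.
have h2 : HsF p.+1 != 0 by apply: HsF_neq0; lia.
exact: (@fS2 _ (Y p) (HsF p) (HsF p.+1) h1 h2).
Qed.

Lemma S0 : al 0 + be m.+1 = X 0.
Proof.
have hh0 : HsF 0 != 0 by apply: HsF_neq0.
have h2 : HsF m.+2 != 0 by apply: HsF_neq0.
have e3 : HsF m.+2 = Kc X Y 0 m.+2 * HsF 0 by apply: Hs_close1; exact: KF.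
have e2 : HsF m.+1 = Kc X Y 0 m.+2 * h0 X Y m by apply: Hs_close2; exact: KF.
have e1 : HsF 1 = X 0 * HsF 0 - Y m.+1 * h0 X Y m.
  rewrite /HsF /Hs; change (Kc X Y 0 1) with (X 0); change (Kc X Y 1 0) with (1 : F).
  rewrite mulr1; reflexivity.
have hl : Kc X Y 0 m.+2 != 0.
  move: h2; rewrite e3 mulf_eq0 negb_or; case/andP => hh _; exact hh.
rewrite /al /be e1 e2 e3.
exact: (@fS0 _ (X 0) (Y m.+1) (h0 X Y m) (HsF 0) (Kc X Y 0 m.+2) hh0 hl).
Qed.

Definition hs (t : 'I_(N + N)) : F :=
  match split t with inl j => al (rel j) | inr j => be (rel j) end.
Definition sm : R -> F := mmap ((@tofrac _) \o (@mpolyC _ C)) hs.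

Lemma smX t : sm 'X_t = hs t. Proof. by rewrite /sm mmapX mmap1U. Qed.
Lemma smD : {morph sm : x y / x + y}. Proof. by move=> x y; rewrite /sm rmorphD. Qed.
Lemma smM : {morph sm : x y / x * y}. Proof. by move=> x y; rewrite /sm rmorphM. Qed.
Lemma smC a : sm a%:MP = (a%:MP)%:F. Proof. by rewrite /sm mmapC. Qed.

Lemma sm_av k : sm (av m.+1 k) = al (rel (inZp k)).
Proof. by rewrite /av smX /hs (unsplitK (inl _)). Qed.
Lemma sm_bv k : sm (bv m.+1 k) = be (rel (inZp k)).
Proof. by rewrite /bv smX /hs (unsplitK (inr _)). Qed.

Lemma sm_phi_x p : (p < N)%N -> sm (phi (xr p)) = th (xr p).
Proof.
move=> hp; rewrite /M1.xr phi_av smD sm_av sm_bv rel_inZp // rel_gen.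
rewrite (_ : (i + p + m.+1 + (N - i) = (p + m.+1) + N)%N); last by have := ltn_ord i; lia.
rewrite modnDr; case: p hp => [|q] hq.
  by rewrite add0n modn_small // S0.
rewrite (_ : (q.+1 + m.+1 = q + N)%N); last by lia.
rewrite modnDr modn_small; last by lia.
rewrite S1 //; lia.
Qed.

Lemma sm_phi_y p : (p < N)%N -> sm (phi (yr p)) = th (yr p).
Proof.
by move=> hp; rewrite /M1.yr phi_bv smM sm_av sm_bv rel_inZp // S2.
Qed.

Lemma sm_phi q : sm (phi q) = th q.
Proof.
apply: (@eq_on_ring _ _ (fun q => sm (phi q)) th).
- by move=> x y; rewrite phiD smD.
- by move=> x y; rewrite phiM smM.
- exact: thD.
- exact: thM.
- by move=> a; rewrite phiC smC thC.
move=> t; rewrite -(splitK t); case: (split t) => j /=.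
  have := sm_phi_x _ (rel_lt j); rewrite /M1.xr /av inZp_rel; exact.
have := sm_phi_y _ (rel_lt j); rewrite /M1.yr /bv inZp_rel; exact.
Qed.

Theorem main_thm (g h : R) :
  in_LSym m.+1 g -> g != 0 -> g = kappa m.+1 i * h -> in_LSym m.+1 h.
Proof.
move=> [P hP] g0 hgh.
have hk : kappa m.+1 i = phi K by rewrite /K phiK.
have hP0 : th P = 0.
  rewrite -sm_phi -[phi P]/(comp_mpoly _ P) -hP hgh hk smM sm_phi thK mul0r //.
have [Q hQ] := @th_ker m i P hP0.
exists Q; have k0 : kappa m.+1 i != 0.
  by apply/negP => /eqP hk0; move: g0; rewrite hgh hk0 mul0r eqxx.
apply: (mulfI k0); rewrite -hgh hP -[comp_mpoly _ P]/(phi P) hQ phiM -hk.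
by [].
Qed.

End Main4.

End M4.
Import M4.

Theorem lemmaB4 (n : nat) (i : 'I_n.+1) (g h : {mpoly C[n.+1 + n.+1]}) :
  in_LSym n g -> g != 0 -> g = kappa n i * h -> in_LSym n h.
Proof.
case: n i g h => [|m] i g h.
  have k1 : kappa 0 i = 1 := kap0 0 i.
  by move=> hg _; rewrite k1 mul1r => <-.
exact: main_thm.
Qed.
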